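(* Let $\mathbf v\in\mathbb{R}^\infty$, and let $\mathbf w=\mathbb{F}^{\rm F}\mathbf v$ and $\mathbf x=\mathbb{L}^{\rm F}\mathbf v$, where $\mathbb{F}^{\rm F}=\left(\frac{x}{1-x},\frac{x^2}{1-x}\right)$ and $\mathbb{L}^{\rm F}=\left(\frac{2-x}{1-x},\frac{x^2}{1-x}\right)$. Let $D=(1,-x)$, $\mathbb{F}^{\rm S}=(1,x(1+x))$, $\mathbb{L}^{\rm S}=(1+2x,x(1+x))$ and $C(x)=\frac{1-\sqrt{1-4x}}{2x}$. Then: (a) $\left(\frac{2-xC(x)}{xC(x)},xC(x)\right)\mathbf w=D(\mathbb{F}^{\rm S})^{-1}D\,\mathbf x$; (b) $\left(\frac{2-xC(x)}{xC(x)-2x^2C(x)^2},xC(x)\right)\mathbf w=D(\mathbb{L}^{\rm S})^{-1}D\,\mathbf x$; (c) $\left(\frac{xC(x)}{2-xC(x)},xC(x)\right)\mathbf x=D(\mathbb{F}^{\rm S})^{-1}D\,\mathbf w$; (d) $\left(\frac{xC(x)}{(1-2xC(x))(2-xC(x))},xC(x)\right)\mathbf x=D(\mathbb{L}^{\rm S})^{-1}D\,\mathbf w$.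
   Context: $\mathbb{R}^\infty$ is the space of real column vectors $[v_0,v_1,\ldots]^T$, identified with generating functions $V(x)=\sum_n v_nx^n$. For a formal power series $f(x)$ with $f(0)=0$ and a series $g(x)$, $(g(x),f(x))$ denotes the operator/infinite lower triangular matrix whose $j$-th column has generating function $g(x)f(x)^j$; it sends $\mathbf u$ with generating function $U(x)$ to the sequence with generating function $g(x)U(f(x))$. In (a) and (b) the first component $g$ is a formal Laurent series with a pole of order one at $x=0$; the product $g(x)W(xC(x))$ is nevertheless a formal power series because the generating function $W$ of $\mathbf w$ has zero constant term, and $(g,f)\mathbf w$ denotes the sequence with that generating function. Products of such matrices obey $(g,f)(h,l)=(g\cdot h(f),l(f))$, and for Riordan matrices ($g(0)\ne0$, $f'(0)\neq0$) inverses are $(g,f)^{-1}=(1/g(\bar f),\bar f)$ with $\bar f$ the compositional inverse of $f$. *)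

(* Defs.v *)
From HB Require Import structures.
From mathcomp Require Import all_boot all_order all_algebra.
From mathcomp Require Import reals.
Set Implicit Arguments. Unset Strict Implicit. Unset Printing Implicit Defensive.
Import Order.TTheory GRing.Theory Num.Theory.
Local Open Scope ring_scope.

(* Formal power series = coefficient sequences; also elements of R^\infty. *)
Definition series (R : realType) := nat -> R.

Section Series.
Variable R : realType.
Implicit Types a b : series R.

Definition sconst (c : R) : series R := fun n => if n == 0%N then c else 0.
Definition sone : series R := sconst 1.
Definition sX : series R := fun n => if n == 1%N then 1 else 0.
Definition sadd a b : series R := fun n => a n + b n.
Definition sopp a : series R := fun n => - a n.
Definition ssub a b : series R := fun n => a n - b n.
Definition sscale (c : R) a : series R := fun n => c * a n.
Definition smul a b : series R := fun n => \sum_(i < n.+1) a i * b (n - i)%N.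
Fixpoint spow a (k : nat) : series R :=
  match k with 0%N => sone | k'.+1 => smul a (spow a k') end.

Fixpoint build (step : seq R -> nat -> R) (n : nat) : seq R :=
  match n with
  | 0%N => [:: step [::] 0%N]
  | n'.+1 => let s := build step n' in rcons s (step s n)
  end.
Definition seq_of (step : seq R -> nat -> R) : series R :=
  fun n => nth 0 (build step n) n.

(* Solution u of the lower-triangular system A u = y (forward substitution);
   for A lower triangular with nonzero diagonal, u = A^{-1} y. *)
Definition tri_solve (A : nat -> nat -> R) (y : series R) : series R :=
  seq_of (fun s n => (y n - \sum_(j < n) A n j * nth 0 s j) / A n n).

(* multiplicative inverse of a series with nonzero constant term *)
Definition sinv a : series R :=
  tri_solve (fun n j => if (j <= n)%N then a (n - j)%N else 0) sone.
Definition sdiv a b : series R := smul a (sinv b).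

Definition sdivx a : series R := fun n => a n.+1.

(* square root of a series with constant term 1 (the one with constant term 1) *)
Definition ssqrt a : series R :=
  seq_of (fun s n => if n == 0%N then 1
     else (a n - \sum_(1 <= i < n) nth 0 s i * nth 0 s (n - i)%N) / 2).

(* Riordan array (g, f): entry (n,k) = [x^n] g f^k  (f(0) = 0 assumed) *)
Definition riordan_mat (g f : series R) : nat -> nat -> R :=
  fun n k => smul g (spow f k) n.
(* (g,f) u  has generating function g(x) U(f(x)) *)
Definition riordan (g f : series R) (u : series R) : series R :=
  fun n => \sum_(k < n.+1) u k * riordan_mat g f n k.
Definition riordan_inv (g f : series R) (y : series R) : series R :=
  tri_solve (riordan_mat g f) y.

(* Laurent first component g = N / Dn, where Dn(0) = 0 and (Dn/x)(0) <> 0,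
   so g = (N / (Dn/x)) / x has a simple pole at 0. For w with w_0 = 0,
   g(x) W(f(x)) = x^{-1} (N/(Dn/x))(x) W(f(x)), whose n-th coefficient
   is the (n+1)-th coefficient of (N/(Dn/x)) W(f). *)
Definition lriordan (N Dn f : series R) (w : series R) : series R :=
  fun n => riordan (sdiv N (sdivx Dn)) f w n.+1.

Definition FF_g : series R := sdiv sX (ssub sone sX).
Definition FF_f : series R := sdiv (smul sX sX) (ssub sone sX).
Definition LF_g : series R := sdiv (ssub (sconst 2) sX) (ssub sone sX).
Definition LF_f : series R := FF_f.
Definition FS_g : series R := sone.
Definition FS_f : series R := smul sX (sadd sone sX).
Definition LS_g : series R := sadd sone (sscale 2 sX).
Definition LS_f : series R := FS_f.
Definition Dop (u : series R) : series R := riordan sone (sopp sX) u.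

Definition catC : series R :=
  sdivx (sscale (2^-1) (ssub sone (ssqrt (ssub sone (sscale 4 sX))))).
Definition xC : series R := smul sX catC.

End Series.

(* Main.v *)
Require Import Defs.
From HB Require Import structures.
From mathcomp Require Import all_boot all_order all_algebra.
From mathcomp Require Import reals boolp.
From mathcomp Require Import ring lra.
Set Implicit Arguments. Unset Strict Implicit. Unset Printing Implicit Defensive.
Import Order.TTheory GRing.Theory Num.Theory.
Local Open Scope ring_scope.

Section PolyM.
Variable R : realType.
Implicit Types p q s t : {poly R}.

Definition eqm (N : nat) p q := exists s, p = q + s * 'X^N.

Lemma eqmP N p q : eqm N p q <-> forall i, (i < N)%N -> p`_i = q`_i.
Proof.
split.
  by move=> [s ->] i Hi; rewrite coefD coefMXn Hi addr0.
move=> H; exists (drop_poly N (p - q)).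
have Ht : take_poly N (p - q) = 0.
  by apply/polyP => i; rewrite coef_take_poly coef0; case: ifP => // Hi;
     rewrite coefB H // subrr.
have := poly_take_drop N (p - q); rewrite Ht add0r => ->.
by ring.
Qed.

Lemma eqm_refl N p : eqm N p p.
Proof. by exists 0; rewrite mul0r addr0. Qed.

Lemma eqm_sym N p q : eqm N p q -> eqm N q p.
Proof. by move=> [s ->]; exists (- s); ring. Qed.

Lemma eqm_trans N p q r : eqm N p q -> eqm N q r -> eqm N p r.
Proof. by move=> [s ->] [t ->]; exists (s + t); ring. Qed.

Lemma eqmD N p p' q q' : eqm N p p' -> eqm N q q' -> eqm N (p + q) (p' + q').
Proof. by move=> [s ->] [t ->]; exists (s + t); ring. Qed.

Lemma eqmN N p p' : eqm N p p' -> eqm N (- p) (- p').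
Proof. by move=> [s ->]; exists (- s); ring. Qed.

Lemma eqmM N p p' q q' : eqm N p p' -> eqm N q q' -> eqm N (p * q) (p' * q').
Proof. by move=> [s ->] [t ->]; exists (s * q' + p' * t + s * t * 'X^N); ring. Qed.

Lemma eqmX N p p' k : eqm N p p' -> eqm N (p ^+ k) (p' ^+ k).
Proof.
move=> H; elim: k => [|k IH]; first exact: eqm_refl.
by rewrite !exprS; apply: eqmM.
Qed.

Lemma comp_pow p q k : (p ^+ k) \Po q = (p \Po q) ^+ k.
Proof.
elim: k => [|k IH]; first by rewrite !expr0 -polyC1 comp_polyC.
by rewrite !exprS comp_polyM IH.
Qed.

Lemma X_factor q : q`_0 = 0 -> q = drop_poly 1 q * 'X.
Proof.
move=> H0.
have Ht : take_poly 1 q = 0.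
  apply/polyP => i; rewrite coef_take_poly coef0; case: ifP => // Hi.
  by move: Hi; rewrite ltnS leqn0 => /eqP ->.
by have := poly_take_drop 1 q; rewrite Ht add0r expr1 => ->.
Qed.

Lemma eqm_comp N p p' q q' : eqm N p p' -> eqm N q q' -> q`_0 = 0 ->
  eqm N (p \Po q) (p' \Po q').
Proof.
move=> [s ->] Hq H0; apply: (@eqm_trans _ _ (p' \Po q)).
  exists ((s \Po q) * (drop_poly 1 q) ^+ N).
  have Eq : q ^+ N = (drop_poly 1 q) ^+ N * 'X^N.
    by rewrite {1}(X_factor H0) exprMn.
  rewrite comp_polyD comp_polyM comp_pow comp_polyX Eq.
  by rewrite mulrA.
elim/poly_ind: p' => [|r c IH]; first by rewrite !comp_poly0; exact: eqm_refl.
rewrite !comp_polyD !comp_polyM !comp_polyX !comp_polyC.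
apply: eqmD; last exact: eqm_refl.
exact: eqmM.
Qed.

End PolyM.

Section Bridge.
Variable R : realType.
Implicit Types a b c f g u : series R.
Implicit Types p q : {poly R}.

Definition P N (a : series R) : {poly R} := \poly_(i < N) a i.

Lemma coefP N a i : (P N a)`_i = if (i < N)%N then a i else 0.
Proof. by rewrite coef_poly. Qed.

Lemma smulP N a b n : (n < N)%N -> smul a b n = (P N a * P N b)`_n.
Proof.
move=> Hn; rewrite coefM /smul; apply: eq_bigr => [[i Hi]] _ /=.
rewrite !coefP (leq_trans Hi Hn) (leq_ltn_trans (leq_subr i n) Hn) //.
Qed.

Lemma P_smul N a b : eqm N (P N (smul a b)) (P N a * P N b).
Proof. by apply/eqmP => i Hi; rewrite coefP Hi; exact: smulP. Qed.

Lemma P_sadd N a b : P N (sadd a b) = P N a + P N b.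
Proof. by apply/polyP => i; rewrite coefD !coefP; case: ifP; rewrite ?addr0. Qed.

Lemma P_sopp N a : P N (sopp a) = - P N a.
Proof. by apply/polyP => i; rewrite coefN !coefP; case: ifP; rewrite ?oppr0. Qed.

Lemma P_ssub N a b : P N (ssub a b) = P N a - P N b.
Proof. by apply/polyP => i; rewrite coefB !coefP; case: ifP; rewrite ?subr0. Qed.

Lemma P_sscale N (k : R) a : P N (sscale k a) = k *: P N a.
Proof. by apply/polyP => i; rewrite coefZ !coefP; case: ifP; rewrite ?mulr0. Qed.

Lemma P_sconst N (k : R) : eqm N (P N (sconst k)) k%:P.
Proof. by apply/eqmP => i Hi; rewrite coefP Hi coefC. Qed.

Lemma P_sone N : eqm N (P N (@sone R)) 1.
Proof. by rewrite -polyC1; exact: P_sconst. Qed.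

Lemma P_sX N : eqm N (P N (@sX R)) 'X.
Proof. by apply/eqmP => i Hi; rewrite coefP Hi coefX /sX; case: (i == 1)%N. Qed.

Lemma P_spow N f k : eqm N (P N (spow f k)) (P N f ^+ k).
Proof.
elim: k => [|k IH]; first exact: P_sone.
rewrite exprS /=; apply: eqm_trans (P_smul _ _ _) _.
exact: eqmM (eqm_refl _ _) IH.
Qed.

Lemma eq_series a b : (forall N, eqm N (P N a) (P N b)) -> a = b.
Proof.
move=> H; apply: funext => n.
by have := (eqmP _ _ _).1 (H n.+1) n (ltnSn n); rewrite !coefP ltnSn.
Qed.

Lemma comp_widen N p q : (size p <= N)%N ->
  p \Po q = \sum_(k < N) p`_k *: q ^+ k.
Proof.
move=> Hs; rewrite comp_polyE (big_ord_widen N (fun k => p`_k *: q ^+ k) Hs).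
rewrite big_mkcond; apply: eq_bigr => k _; case: ifP => // Hk.
by rewrite nth_default ?scale0r // leqNgt Hk.
Qed.

Lemma P_riordan N g f u : f 0%N = 0 ->
  eqm N (P N (riordan g f u)) (P N g * (P N u \Po P N f)).
Proof.
move=> f0; apply/eqmP => i Hi.
rewrite coefP Hi /riordan /riordan_mat.
have E1 k : smul g (spow f k) i = (P N g * P N f ^+ k)`_i.
  rewrite (smulP _ _ Hi).
  exact: ((eqmP _ _ _).1 (eqmM (eqm_refl N (P N g)) (P_spow N f k)) i Hi).
rewrite (comp_widen _ (size_poly _ _)) mulr_sumr coef_sum.
under eq_bigr do rewrite E1.
under [RHS]eq_bigr do rewrite -scalerAr coefZ coefP ltn_ord.
rewrite -(big_mkord xpredT (fun k => u k * (P N g * P N f ^+ k)`_i)).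
rewrite -(big_mkord xpredT (fun k => u k * (P N g * P N f ^+ k)`_i)).
rewrite [RHS](big_cat_nat (n := i.+1) (leq0n i.+1) Hi) /=.
rewrite [X in _ = _ + X]big_nat_cond [X in _ = _ + X]big1 ?addr0 //.
move=> k /andP[/andP[Hk _] _].
have Pf0 : (P N f)`_0 = 0 by rewrite coefP (leq_ltn_trans (leq0n i) Hi).
rewrite (X_factor Pf0) exprMn mulrA coefMXn Hk mulr0 //.
Qed.

End Bridge.

Section FpsDef.
Variable R : realType.
Record fps := Fps { fc : series R }.

Lemma fps_eq (a b : fps) : fc a = fc b -> a = b.
Proof. by case: a; case: b => ? ? /= ->. Qed.

HB.instance Definition _ := gen_eqMixin fps.
HB.instance Definition _ := gen_choiceMixin fps.

Definition fzero := Fps (fun _ => 0).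
Definition fopp (a : fps) := Fps (sopp (fc a)).
Definition fadd (a b : fps) := Fps (sadd (fc a) (fc b)).
Definition fone := Fps (@sone R).
Definition fmul (a b : fps) := Fps (smul (fc a) (fc b)).

Lemma faddA : associative fadd.
Proof. by move=> a b c; apply: fps_eq; apply: funext => n; rewrite /= /sadd addrA. Qed.
Lemma faddC : commutative fadd.
Proof. by move=> a b; apply: fps_eq; apply: funext => n; rewrite /= /sadd addrC. Qed.
Lemma fadd0 : left_id fzero fadd.
Proof. by move=> a; apply: fps_eq; apply: funext => n; rewrite /= /sadd add0r. Qed.
Lemma faddN : left_inverse fzero fopp fadd.
Proof. by move=> a; apply: fps_eq; apply: funext => n; rewrite /= /sadd /sopp addNr. Qed.

HB.instance Definition _ := GRing.isZmodule.Build fps faddA faddC fadd0 faddN.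

Lemma fmulA : associative fmul.
Proof.
move=> a b c; apply: fps_eq; apply: eq_series => N /=.
apply: eqm_trans (P_smul _ _ _) _.
apply: eqm_trans (eqmM (eqm_refl _ _) (P_smul _ _ _)) _.
apply: eqm_sym; apply: eqm_trans (P_smul _ _ _) _.
apply: eqm_trans (eqmM (P_smul _ _ _) (eqm_refl _ _)) _.
rewrite mulrA; exact: eqm_refl.
Qed.

Lemma fmulC : commutative fmul.
Proof.
move=> a b; apply: fps_eq; apply: funext => n /=.
by rewrite !(smulP _ _ (ltnSn n)) mulrC.
Qed.

Lemma fmul1 : left_id fone fmul.
Proof.
move=> a; apply: fps_eq; apply: eq_series => N /=.
apply: eqm_trans (P_smul _ _ _) _.
apply: eqm_trans (eqmM (P_sone _ _) (eqm_refl _ _)) _.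
rewrite mul1r; exact: eqm_refl.
Qed.

Lemma fmulDl : left_distributive fmul fadd.
Proof.
move=> a b c; apply: fps_eq; apply: eq_series => N /=.
apply: eqm_trans (P_smul _ _ _) _.
rewrite !P_sadd mulrDl; apply: eqmD; apply: eqm_sym; exact: P_smul.
Qed.

Lemma fone_neq0 : fone != fzero.
Proof.
apply/eqP => H; have := congr1 (fun a => fc a 0%N) H.
by rewrite /= /sone /sconst /=; apply/eqP; rewrite oner_eq0.
Qed.

HB.instance Definition _ := GRing.Zmodule_isComNzRing.Build fps fmulA fmulC fmul1 fmulDl fone_neq0.

End FpsDef.

Section SeqOf.
Variable R : realType.
Implicit Types step : seq R -> nat -> R.

Lemma size_build step n : size (build step n) = n.+1.
Proof. by elim: n => [|n IH] //=; rewrite size_rcons IH. Qed.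

Lemma nth_build step n i : (i <= n)%N -> nth 0 (build step n) i = seq_of step i.
Proof.
elim: n => [|n IH]; first by rewrite leqn0 => /eqP ->.
rewrite leq_eqVlt => /orP[/eqP -> //|Hi].
by rewrite /= nth_rcons size_build Hi IH.
Qed.

Lemma seq_of_rec step n :
  (forall s s' m, (forall j, (j < m)%N -> nth 0 s j = nth 0 s' j) -> step s m = step s' m) ->
  seq_of step n = step (mkseq (seq_of step) n) n.
Proof.
move=> Hs; case: n => [//|n].
rewrite /seq_of /= nth_rcons size_build ltnn eqxx.
apply: Hs => j Hj; rewrite nth_mkseq // nth_build //.
Qed.

Lemma tri_solve_eq (A : nat -> nat -> R) y n :
  tri_solve A y n = (y n - \sum_(j < n) A n j * tri_solve A y j) / A n n.
Proof.
rewrite /tri_solve seq_of_rec; last first.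
  move=> s s' m H; congr ((_ - _) / _); apply: eq_bigr => j _; rewrite H //.
congr ((_ - _) / _); apply: eq_bigr => j _; rewrite nth_mkseq //.
Qed.

Lemma tri_solve_spec (A : nat -> nat -> R) y n : A n n != 0 ->
  \sum_(j < n.+1) A n j * tri_solve A y j = y n.
Proof.
move=> Hn; rewrite big_ord_recr /= [tri_solve A y n]tri_solve_eq.
rewrite mulrC divfK //; exact: subrKC.
Qed.

Lemma tri_solve_uniq (A : nat -> nat -> R) (y u : series R) : (forall n, A n n != 0) ->
  (forall n, \sum_(j < n.+1) A n j * u j = y n) -> tri_solve A y = u.
Proof.
move=> Hd Hu; apply: funext => n; elim: n {-2}n (leqnn n) => [|n IH] m Hm.
  move: Hm; rewrite leqn0 => /eqP ->.
  have := @tri_solve_spec A y _ (Hd 0%N); rewrite -(Hu 0%N) !big_ord1.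
  by move/(mulfI (Hd 0%N)).
move: Hm; rewrite leq_eqVlt => /orP[/eqP ->|Hm]; last exact: IH.
have := @tri_solve_spec A y _ (Hd n.+1); rewrite -(Hu n.+1) !(big_ord_recr n.+1) /=.
have E : \sum_(j < n.+1) A n.+1 j * tri_solve A y j = \sum_(j < n.+1) A n.+1 j * u j.
  by apply: eq_bigr => j _; rewrite IH // -ltnS.
rewrite E.
by move/addrI/(mulfI (Hd n.+1)).
Qed.

End SeqOf.

Section FpsTh.
Variable R : realType.
Local Notation fps := (fps R).
Implicit Types a b u f g : fps.

Definition fx : fps := Fps (@sX R).
Definition fconst (k : R) : fps := Fps (sconst k).
Definition cmp (u f : fps) : fps := Fps (riordan (@sone R) (fc f) (fc u)).

Lemma fcM a b : fc (a * b) = smul (fc a) (fc b). Proof. by []. Qed.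
Lemma fcD a b n : fc (a + b) n = fc a n + fc b n. Proof. by []. Qed.
Lemma fcN a n : fc (- a) n = - fc a n. Proof. by []. Qed.
Lemma fcB a b n : fc (a - b) n = fc a n - fc b n. Proof. by []. Qed.
Lemma fc1 : fc (1 : fps) = (@sone R). Proof. by []. Qed.
Lemma fc0 n : fc (0 : fps) n = 0. Proof. by []. Qed.

Lemma fcM0 a b : fc (a * b) 0%N = fc a 0%N * fc b 0%N.
Proof. by rewrite fcM /smul big_ord1. Qed.

Lemma fc1_0 : fc (1 : fps) 0%N = 1. Proof. by []. Qed.
Lemma fcx_0 : fc fx 0%N = 0. Proof. by []. Qed.

Lemma fc_xM a n : fc (fx * a) n = if n == 0%N then 0 else fc a n.-1.
Proof.
rewrite fcM (smulP _ _ (ltnSn n)).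
have := (eqmP _ _ _).1 (eqmM (P_sX R n.+1) (eqm_refl _ (P n.+1 (fc a)))) n (ltnSn n).
move=> ->; rewrite coefXM coefP; case: n => //= n; rewrite ltnS leqnSn //.
Qed.

Lemma fc_xnM a n : fc (fx ^+ n * a) n = fc a 0%N.
Proof.
elim: n => [|n IH]; first by rewrite expr0 mul1r.
by rewrite exprS -mulrA fc_xM.
Qed.

Lemma sdivxK a : fc a 0%N = 0 -> fx * Fps (sdivx (fc a)) = a.
Proof. by move=> H; apply: fps_eq; apply: funext => -[|n]; rewrite fc_xM. Qed.

Lemma sdivx_xM a : sdivx (fc (fx * a)) = fc a.
Proof. by apply: funext => n; rewrite /sdivx fc_xM. Qed.

Lemma x_cancel a b : fx * a = fx * b -> a = b.
Proof. by move=> H; apply: fps_eq; rewrite -sdivx_xM H sdivx_xM. Qed.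

Lemma fconst0 : fconst 0 = 0.
Proof. by apply: fps_eq; apply: funext => -[|n]. Qed.

Lemma fconstD k l : fconst (k + l) = fconst k + fconst l.
Proof. by apply: fps_eq; apply: funext => -[|n]; rewrite /= /sadd /sconst /= ?addr0. Qed.

Lemma fconst1 : fconst 1 = 1. Proof. by []. Qed.

Lemma fconst_nat n : fconst n%:R = n%:R.
Proof.
elim: n => [|n IH]; first exact: fconst0.
by rewrite !mulrS fconstD IH fconst1.
Qed.

Lemma fconstM k a : fconst k * a = Fps (sscale k (fc a)).
Proof.
apply: fps_eq; apply: eq_series => N /=.
apply: eqm_trans (P_smul _ _ _) _.
apply: eqm_trans (eqmM (P_sconst _ _) (eqm_refl _ _)) _.
rewrite P_sscale mul_polyC; exact: eqm_refl.
Qed.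

Lemma fconst_mul k l : fconst k * fconst l = fconst (k * l).
Proof.
rewrite fconstM; apply: fps_eq; apply: funext => -[|n];
by rewrite /= /sscale /sconst /= ?mulr0.
Qed.

Lemma spowE (f : series R) n : spow f n = fc (Fps f ^+ n).
Proof. by elim: n => [|n IH] //=; rewrite exprS fcM IH. Qed.

Lemma P0 N a : fc a 0%N = 0 -> (P N (fc a))`_0 = 0.
Proof. by move=> H; rewrite coefP H; case: ifP. Qed.

Lemma P_fcM N a b : eqm N (P N (fc (a * b))) (P N (fc a) * P N (fc b)).
Proof. exact: P_smul. Qed.

Lemma P_cmp N u f : fc f 0%N = 0 ->
  eqm N (P N (fc (cmp u f))) (P N (fc u) \Po P N (fc f)).
Proof.
move=> H; rewrite /=; apply: eqm_trans (P_riordan _ _ _ H) _.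
rewrite -[X in eqm _ _ X]mul1r; apply: eqmM (P_sone _ _) (eqm_refl _ _).
Qed.

Lemma cmp_coef0 u f : fc (cmp u f) 0%N = fc u 0%N.
Proof. by rewrite /= /riordan big_ord1 /riordan_mat /= /smul big_ord1 /sone /sconst /= !mulr1. Qed.

Lemma cmpD u v f : fc f 0%N = 0 -> cmp (u + v) f = cmp u f + cmp v f.
Proof.
move=> H; apply: fps_eq; apply: eq_series => N.
apply: eqm_trans (P_cmp _ _ H) _.
rewrite /= !P_sadd comp_polyD; apply: eqmD; apply: eqm_sym; exact: P_cmp.
Qed.

Lemma cmp0 f : cmp 0 f = 0.
Proof.
apply: fps_eq; apply: funext => n.
by rewrite /= /riordan big1 // => k _; rewrite mul0r.
Qed.

Lemma cmpN u f : fc f 0%N = 0 -> cmp (- u) f = - cmp u f.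
Proof.
move=> H; apply/eqP; rewrite -addr_eq0 -cmpD // addNr cmp0 //.
Qed.

Lemma cmpB u v f : fc f 0%N = 0 -> cmp (u - v) f = cmp u f - cmp v f.
Proof. by move=> H; rewrite cmpD // cmpN. Qed.

Lemma cmpM u v f : fc f 0%N = 0 -> cmp (u * v) f = cmp u f * cmp v f.
Proof.
move=> H; apply: fps_eq; apply: eq_series => N.
apply: eqm_trans (P_cmp _ _ H) _.
apply: eqm_trans (eqm_comp (P_fcM _ _ _) (eqm_refl _ _) (P0 _ H)) _.
rewrite comp_polyM; apply: eqm_sym; apply: eqm_trans (P_fcM _ _ _) _.
apply: eqmM; exact: P_cmp.
Qed.

Lemma cmpC k f : fc f 0%N = 0 -> cmp (fconst k) f = fconst k.
Proof.
move=> H; apply: fps_eq; apply: eq_series => N.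
apply: eqm_trans (P_cmp _ _ H) _.
apply: eqm_trans (eqm_comp (P_sconst _ _) (eqm_refl _ _) (P0 _ H)) _.
rewrite comp_polyC; apply: eqm_sym; exact: P_sconst.
Qed.

Lemma cmp1 f : fc f 0%N = 0 -> cmp 1 f = 1.
Proof. exact: (cmpC 1). Qed.

Lemma cmp_nat n f : fc f 0%N = 0 -> cmp n%:R f = n%:R.
Proof. by move=> H; rewrite -fconst_nat cmpC. Qed.

Lemma cmpX f : fc f 0%N = 0 -> cmp fx f = f.
Proof.
move=> H; apply: fps_eq; apply: eq_series => N.
apply: eqm_trans (P_cmp _ _ H) _.
apply: eqm_trans (eqm_comp (P_sX R _) (eqm_refl _ _) (P0 _ H)) _.
rewrite comp_polyX; exact: eqm_refl.
Qed.

Lemma cmpXr u : cmp u fx = u.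
Proof.
apply: fps_eq; apply: eq_series => N.
apply: eqm_trans (P_cmp _ _ fcx_0) _.
apply: eqm_trans (eqm_comp (eqm_refl _ _) (P_sX R _) (P0 _ fcx_0)) _.
rewrite comp_polyXr; exact: eqm_refl.
Qed.

Lemma cmpA u f g : fc f 0%N = 0 -> fc g 0%N = 0 ->
  cmp (cmp u f) g = cmp u (cmp f g).
Proof.
move=> Hf Hg.
have Hfg : fc (cmp f g) 0%N = 0 by rewrite cmp_coef0.
apply: fps_eq; apply: eq_series => N.
apply: eqm_trans (P_cmp _ _ Hg) _.
apply: eqm_trans (eqm_comp (P_cmp _ _ Hf) (eqm_refl _ _) (P0 _ Hg)) _.
rewrite -comp_polyA; apply: eqm_sym.
apply: eqm_trans (P_cmp _ _ Hfg) _.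
apply: eqm_comp (eqm_refl _ _) (P_cmp _ _ Hg) (P0 _ Hfg).
Qed.

Lemma riordanE (g f u : series R) : f 0%N = 0 ->
  Fps (riordan g f u) = Fps g * cmp (Fps u) (Fps f).
Proof.
move=> H; apply: fps_eq; apply: eq_series => N.
apply: eqm_trans (P_riordan _ _ _ H) _.
apply: eqm_sym; apply: eqm_trans (P_fcM _ _ _) _.
apply: eqmM (eqm_refl _ _) _; exact: P_cmp.
Qed.

End FpsTh.

Section Inv.
Variable R : realType.
Local Notation fps := (fps R).
Implicit Types a b c : fps.

Lemma fpsK a : Fps (fc a) = a. Proof. by case: a. Qed.

Lemma sinvK (a : series R) : a 0%N != 0 -> Fps a * Fps (sinv a) = 1.
Proof.
move=> Ha; rewrite mulrC; apply: fps_eq; apply: funext => n.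
rewrite fcM /= /sinv.
rewrite -(@tri_solve_spec R (fun n j => if (j <= n)%N then a (n - j)%N else 0) (@sone R) n);
  last by rewrite leqnn subnn.
by rewrite /smul; apply: eq_bigr => [[i Hi]] _ /=; rewrite -ltnS Hi mulrC.
Qed.

Lemma unit_cancel a b c : fc a 0%N != 0 -> a * b = a * c -> b = c.
Proof.
move=> Ha H; have Hi := sinvK Ha; rewrite fpsK in Hi.
by rewrite -[b]mul1r -[c]mul1r -Hi [a * _]mulrC -!mulrA H.
Qed.

Lemma fcX0 a n : fc (a ^+ n) 0%N = fc a 0%N ^+ n.
Proof. by elim: n => [|n IH]; rewrite ?expr0 // !exprS fcM0 IH. Qed.

Definition sq_step (a : series R) := fun (s : seq R) n => if n == 0%N then 1
     else (a n - \sum_(1 <= i < n) nth 0 s i * nth 0 s (n - i)%N) / 2.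

Lemma ssqrt_rec (a : series R) n : (0 < n)%N ->
  ssqrt a n = (a n - \sum_(1 <= i < n) ssqrt a i * ssqrt a (n - i)%N) / 2.
Proof.
move=> Hn; rewrite /ssqrt seq_of_rec; last first.
  move=> s s' m H; case: (m == 0%N) => //; congr ((_ - _) / _).
  apply: eq_big_nat => i /andP[H1 H2]; rewrite !H //.
  by rewrite ltn_subrL (leq_trans _ H1) // (leq_ltn_trans _ H2).
have -> : (n == 0%N) = false by case: n Hn.
congr ((_ - _) / _).
apply: eq_big_nat => i /andP[H1 H2].
rewrite !nth_mkseq //; last by rewrite ltn_subrL (leq_trans _ H1) // (leq_ltn_trans _ H2).
Qed.

Lemma ssqrt0 (a : series R) : ssqrt a 0%N = 1.
Proof. by []. Qed.

Lemma ssqrtK (a : series R) : a 0%N = 1 -> Fps (ssqrt a) * Fps (ssqrt a) = Fps a.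
Proof.
move=> Ha; apply: fps_eq; apply: funext => -[|n].
  by rewrite fcM0 /= Ha mulr1.
rewrite fcM /= /smul -(big_mkord xpredT (fun i => ssqrt a i * ssqrt a (n.+1 - i)%N)).
rewrite big_ltn // big_nat_recr //= subn0 subnn ssqrt0.
rewrite (ssqrt_rec a (ltn0Sn n)).
set M := \sum_(1 <= i < n.+1) _.

lra.
Qed.

End Inv.

Section Cat.
Variable R : realType.
Local Notation fps := (fps R).
Local Notation fx := (@fx R).

Lemma xC_def : Fps (@xC R) = fx * Fps (@catC R). Proof. by []. Qed.

Lemma fc2_0 : fc (2 : fps) 0%N = 2.
Proof. by rewrite -fconst_nat. Qed.

Lemma xC_eq : Fps (@xC R) = fx + Fps (@xC R) * Fps (@xC R).
Proof.
set S := Fps (ssqrt (ssub (@sone R) (sscale 4 (@sX R)))).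
have Hs0 : (ssub (@sone R) (sscale 4 (@sX R))) 0%N = 1.
  by rewrite /ssub /sscale /sone /sconst /sX /= mulr0 subr0.
have HS : S * S = 1 - fconst 4 * fx.
  by rewrite /S ssqrtK // fconstM.
set h := fconst (2^-1 : R).
have Hh : h * 2 = 1.
  rewrite -(fconst_nat R 2) fconst_mul mulVf ?fconst1 //.
  by rewrite pnatr_eq0.
have HT0 : (sscale (2^-1) (ssub (@sone R) (ssqrt (ssub (@sone R) (sscale 4 (@sX R)))))) 0%N = 0.
  by rewrite /sscale /ssub ssqrt0 /sone /sconst /= subrr mulr0.
have Hc : Fps (@xC R) = h * (1 - S).
  rewrite xC_def /catC (sdivxK (a := Fps _) HT0) fconstM //.
rewrite Hc.
have -> : fx + h * (1 - S) * (h * (1 - S)) = fx + h * h * (1 - 2 * S) + h * h * (S * S) by ring.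
rewrite HS (fconst_nat R 4).
have -> : fx + h * h * (1 - 2 * S) + h * h * (1 - 4%:R * fx)
   = (h * 2) * (h * (1 - S)) + (1 - (h * 2) * (h * 2)) * fx by ring.
by rewrite Hh !mul1r subrr mul0r addr0.
Qed.

Lemma xC0 : (@xC R) 0%N = 0.
Proof. by rewrite -[(@xC R)]/(fc (fx * Fps (@catC R))) fcM0 fcx_0 mul0r. Qed.

Lemma catC0 : (@catC R) 0%N = 1.
Proof.
have H := xC_eq; rewrite xC_def in H.
have H2 : Fps (@catC R) = 1 + Fps (@catC R) * (fx * Fps (@catC R)).
  apply: x_cancel; rewrite {1}H; ring.
by rewrite -[(@catC R)]/(fc (Fps (@catC R))) H2 fcD fc1_0 fcM0 fcM0 fcx_0 mul0r mulr0 addr0.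
Qed.

Lemma quad_uniq (hh y z : fps) : fc y 0%N = 0 -> fc z 0%N = 0 ->
  y = hh + y * y -> z = hh + z * z -> y = z.
Proof.
move=> Hy0 Hz0 Hy Hz.
have E : (1 - y - z) * (y - z) = (1 - y - z) * 0.
  have -> : (1 - y - z) * (y - z) = (y - (hh + y * y)) - (z - (hh + z * z)) by ring.
  by rewrite -Hy -Hz !subrr ?subr0 mulr0.
apply/eqP; rewrite -subr_eq0; apply/eqP; apply: unit_cancel E.
by rewrite !fcB fc1_0 Hy0 Hz0 !subr0 oner_eq0.
Qed.

End Cat.

Section Main.
Variable R : realType.
Local Notation fps := (fps R).
Local Notation fx := (@fx R).
Local Notation c := (Fps (@xC R)).
Local Notation CC := (Fps (@catC R)).

Lemma mfx0 : fc (- fx) 0%N = 0. Proof. by rewrite fcN fcx_0 oppr0. Qed.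

Lemma DopE (u : series R) : Fps (Dop u) = cmp (Fps u) (- fx).
Proof.
rewrite /Dop riordanE; last by rewrite /sopp /sX /= oppr0.
have -> : Fps (@sone R) = 1 by [].
have -> : Fps (sopp (@sX R)) = - fx by [].
by rewrite mul1r.
Qed.

Lemma DopK (u : series R) : Dop (Dop u) = u.
Proof.
have H : Fps (Dop (Dop u)) = Fps u.
  rewrite !DopE cmpA ?mfx0 // cmpN ?mfx0 // cmpX ?mfx0 // opprK cmpXr //.
exact: (congr1 (@fc R) H).
Qed.

Lemma riordan_inv_solve (g f y u : series R) : (forall n, riordan_mat g f n n != 0) ->
  riordan g f u = y -> riordan_inv g f y = u.
Proof.
move=> Hd Hu; apply: tri_solve_uniq => // n.
by rewrite -Hu /riordan; apply: eq_bigr => j _; rewrite mulrC.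
Qed.

Lemma FSf_def : Fps (@FS_f R) = fx * (1 + fx). Proof. by []. Qed.
Lemma FSf0 : (@FS_f R) 0%N = 0.
Proof.
have -> : (@FS_f R) = fc (fx * (1 + fx)) by [].
by rewrite fcM0 fcx_0 mul0r.
Qed.
Lemma LSg_def : Fps (@LS_g R) = 1 + 2 * fx.
Proof. by rewrite -(fconst_nat R 2) fconstM. Qed.

Lemma diag_FS n : riordan_mat (@FS_g R) (@FS_f R) n n != 0.
Proof.
rewrite /riordan_mat spowE.
have -> : smul (@FS_g R) (fc (Fps (@FS_f R) ^+ n)) = fc ((1 : fps) * (fx * (1 + fx)) ^+ n) by [].
rewrite mul1r exprMn fc_xnM fcX0 fcD fc1_0 fcx_0 addr0 expr1n oner_eq0 //.
Qed.

Lemma diag_LS n : riordan_mat (@LS_g R) (@LS_f R) n n != 0.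
Proof.
rewrite /riordan_mat spowE.
have -> : smul (@LS_g R) (fc (Fps (@LS_f R) ^+ n)) = fc (Fps (@LS_g R) * (fx * (1 + fx)) ^+ n) by [].
rewrite LSg_def exprMn mulrCA fc_xnM fcM0 fcX0 !fcD fc1_0 fcM0 fcx_0 addr0 mulr0 addr0.
by rewrite expr1n mulr1 oner_eq0.
Qed.

Definition hh : fps := - (fx * (1 + fx)).
Lemma hh0 : fc hh 0%N = 0. Proof. by rewrite fcN fcM0 fcx_0 mul0r oppr0. Qed.

Lemma DopFS (u : fps) : cmp (cmp u (- fx)) (Fps (@FS_f R)) = cmp u hh.
Proof.
have H1 := mfx0; have H2 : fc (Fps (@FS_f R)) 0%N = 0 := FSf0.
by rewrite cmpA // cmpN // cmpX.
Qed.

Lemma c0 : fc c 0%N = 0. Proof. exact: xC0. Qed.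

Lemma c_hh : cmp c hh = - fx.
Proof.
apply: (@quad_uniq R hh); first by rewrite cmp_coef0 c0.
- by rewrite fcN fcx_0 oppr0.
- by rewrite {1}xC_eq cmpD ?hh0 // cmpX ?hh0 // cmpM ?hh0.
- by rewrite /hh; ring.
Qed.


Variable v : series R.
Local Notation w := (riordan (@FF_g R) (@FF_f R) v).
Local Notation xx := (riordan (@LF_g R) (@LF_f R) v).
Local Notation W := (Fps w).
Local Notation X := (Fps xx).

Lemma FFf0 : (@FF_f R) 0%N = 0.
Proof. by rewrite /FF_f /sdiv /smul big_ord1 /smul big_ord1 /sX /= !mul0r. Qed.

Lemma key : fx * X = (2 - fx) * W.
Proof.
have H1 := FFf0; have H2 : (@LF_f R) 0%N = 0 := FFf0.
rewrite !riordanE //.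
have -> : Fps (@LF_g R) = (fconst 2 - fx) * Fps (sinv (ssub (@sone R) (@sX R))) by [].
have -> : Fps (@FF_g R) = fx * Fps (sinv (ssub (@sone R) (@sX R))) by [].
rewrite fconst_nat; ring.
Qed.

Lemma W0 : fc W 0%N = 0.
Proof.
have H1 := FFf0; rewrite riordanE //.
have -> : Fps (@FF_g R) = fx * Fps (sinv (ssub (@sone R) (@sX R))) by [].
by rewrite fcM0 fcM0 fcx_0 !mul0r.
Qed.

Lemma key_m : - fx * cmp X (- fx) = (2 - - fx) * cmp W (- fx).
Proof.
have := congr1 (fun a => cmp a (- fx)) key => /=.
by rewrite !cmpM ?mfx0 // cmpX ?mfx0 // cmpB ?mfx0 // cmpX ?mfx0 // cmp_nat ?mfx0.
Qed.


Lemma reduce_FS (L y : series R) : cmp (Fps L) hh = cmp (Fps y) (- fx) ->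
  L = Dop (riordan_inv (@FS_g R) (@FS_f R) (Dop y)).
Proof.
move=> H.
rewrite (@riordan_inv_solve _ _ _ (Dop L) (@diag_FS)) ?DopK //.
suff H' : Fps (riordan (@FS_g R) (@FS_f R) (Dop L)) = Fps (Dop y).
  exact: (congr1 (@fc R) H').
rewrite riordanE; last exact: FSf0.
rewrite !DopE -H DopFS.
have -> : Fps (@FS_g R) = 1 by [].
exact: mul1r.
Qed.

Lemma reduce_LS (L y : series R) : (1 + 2 * fx) * cmp (Fps L) hh = cmp (Fps y) (- fx) ->
  L = Dop (riordan_inv (@LS_g R) (@LS_f R) (Dop y)).
Proof.
move=> H.
rewrite (@riordan_inv_solve _ _ _ (Dop L) (@diag_LS)) ?DopK //.
suff H' : Fps (riordan (@LS_g R) (@LS_f R) (Dop L)) = Fps (Dop y).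
  exact: (congr1 (@fc R) H').
rewrite riordanE; last exact: FSf0.
have -> : Fps (@LS_f R) = Fps (@FS_f R) by [].
by rewrite !DopE -H DopFS LSg_def.
Qed.

Lemma part_c :
  riordan (sdiv (@xC R) (ssub (sconst 2) (@xC R))) (@xC R) xx
    = Dop (riordan_inv (@FS_g R) (@FS_f R) (Dop w)).
Proof.
apply: reduce_FS.
have H0 := hh0; have Hc0 : fc c 0%N = 0 := c0.
set IK := Fps (sinv (ssub (sconst 2) (@xC R))).
have HK : (2 - c) * IK = 1.
  have -> : (2 : fps) - c = Fps (ssub (sconst 2) (@xC R)) by rewrite -fconst_nat.
  apply: sinvK; rewrite /ssub xC0 subr0 /sconst /= pnatr_eq0 //.
rewrite riordanE // (_ : Fps (sdiv _ _) = c * IK) //.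
rewrite !cmpM // c_hh cmpA // c_hh.
have EK : (2 - - fx) * cmp IK hh = 1.
  by have := congr1 (fun a => cmp a hh) HK; rewrite /= cmpM // cmpB // cmp_nat // c_hh cmp1.
transitivity (cmp IK hh * (- fx * cmp X (- fx))); first by ring.
rewrite key_m.
transitivity ((2 - - fx) * cmp IK hh * cmp W (- fx)); first by ring.
by rewrite EK mul1r.
Qed.

Lemma part_d :
  riordan (sdiv (@xC R) (smul (ssub (@sone R) (sscale 2 (@xC R)))
                                  (ssub (sconst 2) (@xC R)))) (@xC R) xx
        = Dop (riordan_inv (@LS_g R) (@LS_f R) (Dop w)).
Proof.
apply: reduce_LS.
have H0 := hh0; have Hc0 : fc c 0%N = 0 := c0.
set IQ := Fps (sinv (smul (ssub (@sone R) (sscale 2 (@xC R))) (ssub (sconst 2) (@xC R)))).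
have HQ : (1 - 2 * c) * (2 - c) * IQ = 1.
  have -> : (1 - 2 * c) * (2 - c)
     = Fps (smul (ssub (@sone R) (sscale 2 (@xC R))) (ssub (sconst 2) (@xC R))).
    by rewrite -!(fconst_nat R 2) fconstM.
  apply: sinvK; rewrite /smul big_ord1 /ssub /sscale xC0 mulr0 !subr0 /sconst /sone /=.
  by rewrite mul1r pnatr_eq0.
rewrite riordanE // (_ : Fps (sdiv _ _) = c * IQ) //.
rewrite !cmpM // c_hh cmpA // c_hh.
have EQ : (1 - 2 * - fx) * (2 - - fx) * cmp IQ hh = 1.
  have := congr1 (fun a => cmp a hh) HQ.
  by rewrite /= !cmpM // !cmpB // !cmpM // !cmp_nat // cmp1 // c_hh.
transitivity ((1 + 2 * fx) * cmp IQ hh * (- fx * cmp X (- fx))); first by ring.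
rewrite key_m.
transitivity ((1 - 2 * - fx) * (2 - - fx) * cmp IQ hh * cmp W (- fx)); first by ring.
by rewrite EQ mul1r.
Qed.

Lemma part_a :
  lriordan (ssub (sconst 2) (@xC R)) (@xC R) (@xC R) w
    = Dop (riordan_inv (@FS_g R) (@FS_f R) (Dop xx)).
Proof.
apply: reduce_FS.
have H0 := hh0; have Hc0 : fc c 0%N = 0 := c0; have HW0 := W0.
set IC := Fps (sinv (@catC R)).
have HIC : CC * IC = 1 by apply: sinvK; rewrite catC0 oner_eq0.
set G := riordan (sdiv (ssub (sconst 2) (@xC R)) (sdivx (@xC R))) (@xC R) w.
have HG : Fps G = (2 - c) * IC * cmp W c.
  rewrite /G riordanE //.
  have -> : sdivx (@xC R) = @catC R by exact: (sdivx_xM (Fps (@catC R))).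
  by rewrite -fconst_nat.
have HL : fx * Fps (lriordan (ssub (sconst 2) (@xC R)) (@xC R) (@xC R) w) = Fps G.
  apply: (@sdivxK R (Fps G)).
  by rewrite HG fcM0 cmp_coef0 HW0 mulr0.
set L := lriordan _ _ _ w in HL *.
have E1 : hh * cmp (Fps L) hh = (2 - - fx) * cmp IC hh * cmp W (- fx).
  have := congr1 (fun a => cmp a hh) HL.
  rewrite /= HG !cmpM // cmpX // cmpB // cmp_nat // c_hh cmpA // c_hh //.
have E2 : hh * cmp CC hh = - fx.
  by rewrite -c_hh xC_def cmpM // cmpX.
have E3 : cmp IC hh * cmp CC hh = 1.
  by have := congr1 (fun a => cmp a hh) HIC; rewrite /= cmpM // cmp1 // mulrC.
have E5 : (1 + fx) * cmp CC hh = 1.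
  apply: x_cancel; transitivity (- (hh * cmp CC hh)); first by rewrite /hh; ring.
  by rewrite E2 opprK mulr1.
have E6 : cmp IC hh = 1 + fx.
  transitivity (cmp IC hh * ((1 + fx) * cmp CC hh)); first by rewrite E5 mulr1.
  transitivity ((1 + fx) * (cmp IC hh * cmp CC hh)); first by ring.
  by rewrite E3 mulr1.
have E7 : fx * ((1 + fx) * cmp (Fps L) hh) = fx * ((1 + fx) * cmp X (- fx)).
  transitivity (- (hh * cmp (Fps L) hh)); first by rewrite /hh; ring.
  rewrite E1 E6.
  transitivity (- ((1 + fx) * ((2 - - fx) * cmp W (- fx)))); first by ring.
  rewrite -key_m; ring.
apply: unit_cancel (x_cancel E7).
by rewrite fcD fc1_0 fcx_0 addr0 oner_eq0.
Qed.

Lemma part_b :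
  lriordan (ssub (sconst 2) (@xC R))
           (ssub (@xC R) (sscale 2 (smul (@xC R) (@xC R)))) (@xC R) w
    = Dop (riordan_inv (@LS_g R) (@LS_f R) (Dop xx)).
Proof.
apply: reduce_LS.
have H0 := hh0; have Hc0 : fc c 0%N = 0 := c0; have HW0 := W0.
set Dn := ssub (@xC R) (sscale 2 (smul (@xC R) (@xC R))).
have HDn : Fps Dn = c - 2 * (c * c) by rewrite -(fconst_nat R 2) fconstM.
have HDn0 : fc (Fps Dn) 0%N = 0.
  by rewrite HDn fcB fcM0 fcM0 Hc0 !mulr0 subr0.
set E := Fps (sdivx Dn).
have HE : fx * E = Fps Dn := sdivxK HDn0.
have HE' : E = CC - 2 * (CC * c).
  apply: x_cancel; rewrite HE HDn xC_def; ring.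
set IE := Fps (sinv (sdivx Dn)).
have HIE : E * IE = 1.
  apply: sinvK; rewrite -[sdivx Dn]/(fc E) HE' fcB fcM0 fcM0 Hc0 !mulr0 subr0 /= catC0 oner_eq0 //.
set G := riordan (sdiv (ssub (sconst 2) (@xC R)) (sdivx Dn)) (@xC R) w.
have HG : Fps G = (2 - c) * IE * cmp W c.
  by rewrite /G riordanE // -fconst_nat.
have HL : fx * Fps (lriordan (ssub (sconst 2) (@xC R)) Dn (@xC R) w) = Fps G.
  apply: (@sdivxK R (Fps G)).
  by rewrite HG fcM0 cmp_coef0 HW0 mulr0.
set L := lriordan _ _ _ w in HL *.
have E1 : hh * cmp (Fps L) hh = (2 - - fx) * cmp IE hh * cmp W (- fx).
  have := congr1 (fun a => cmp a hh) HL.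
  rewrite /= HG !cmpM // cmpX // cmpB // cmp_nat // c_hh cmpA // c_hh //.
have E2 : hh * cmp E hh = - fx - 2 * (- fx * - fx).
  have := congr1 (fun a => cmp a hh) HE.
  by rewrite /= HDn cmpM // cmpX // cmpB // cmpM // cmp_nat // cmpM // c_hh.
have E3 : cmp IE hh * cmp E hh = 1.
  by have := congr1 (fun a => cmp a hh) HIE; rewrite /= cmpM // cmp1 // mulrC.
have E5 : (1 + fx) * cmp E hh = 1 + 2 * fx.
  apply: x_cancel; transitivity (- (hh * cmp E hh)); first by rewrite /hh; ring.
  by rewrite E2; ring.
have E7 : fx * ((1 + 2 * fx) * cmp (Fps L) hh) = fx * cmp X (- fx).
  rewrite -E5.
  transitivity (- (hh * cmp (Fps L) hh) * cmp E hh); first by rewrite /hh; ring.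
  rewrite E1.
  transitivity (- ((2 - - fx) * cmp W (- fx)) * (cmp IE hh * cmp E hh)); first by ring.
  by rewrite E3 mulr1 -key_m; ring.
exact: (x_cancel E7).
Qed.

End Main.

Unset Implicit Arguments.

Theorem theorem4p3 (R : realType) (v : series R) :
  let w := riordan (@FF_g R) (@FF_f R) v in
  let x := riordan (@LF_g R) (@LF_f R) v in
  [/\ (* (a) *)
      lriordan (ssub (sconst 2) (@xC R)) (@xC R) (@xC R) w
        = Dop (riordan_inv (@FS_g R) (@FS_f R) (Dop x)),
      (* (b) *)
      lriordan (ssub (sconst 2) (@xC R))
               (ssub (@xC R) (sscale 2 (smul (@xC R) (@xC R)))) (@xC R) w
        = Dop (riordan_inv (@LS_g R) (@LS_f R) (Dop x)),
      (* (c) *)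
      riordan (sdiv (@xC R) (ssub (sconst 2) (@xC R))) (@xC R) x
        = Dop (riordan_inv (@FS_g R) (@FS_f R) (Dop w))
    & (* (d) *)
      riordan (sdiv (@xC R) (smul (ssub (@sone R) (sscale 2 (@xC R)))
                                  (ssub (sconst 2) (@xC R)))) (@xC R) x
        = Dop (riordan_inv (@LS_g R) (@LS_f R) (Dop w))].
Proof.
move=> w x; split.
- exact: part_a.
- exact: part_b.
- exact: part_c.
- exact: part_d.
Qed.
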